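(* In the setting described in the context, assume $0<h<\varepsilon$. There is a constant $C$, independent of $h$ and $\varepsilon$, such that for all $v_h\in\widetilde V_h$, $$\varepsilon^{-1}\sum_{T\in\widetilde{\mathcal T}_h}|\varrho|_{0,\infty,T}\,\|v_h\|_{1,T}^2\le C\,\|v_h\|_h^2,$$ where $|\varrho|_{0,\infty,T}=\sup_T|\varrho|$, $\|v\|_{1,T}$ is the $H^1(T)$-norm, and $\|v_h\|_h=\bigl(\varepsilon^{-1}\sum_{T\in\widetilde{\mathcal T}_h}Q_T[\varrho(|v_h|^2+|\nabla v_h|^2)]\bigr)^{1/2}$.
   Context: $n\in\{1,2\}$; $\Omega\subset\mathbb R^{n+1}$ is a bounded polyhedral domain and $\phi:\overline\Omega\to\mathbb R$ is smooth with $0<c_0\le|\nabla\phi|\le c_1$ on $\overline\Omega$. Quadrature: an integer $q\ge0$ and a rule on the reference simplex with weights $\omega_i>0$, $\sum_{i=1}^L\omega_i=1$, points $\widehat b_i$, exact for polynomials of degree $\le q$; on a simplex $T$, $Q_T(g)=|T|\sum_{i=1}^L\omega_ig(b_{i,T})$, $b_{i,T}=\Phi_T(\widehat b_i)$ with $\Phi_T$ the affine map of the reference simplex onto $T$. $\sigma(r)=\cos^{2(q+1)}(r)$ for $|r|\le\pi/2$, $\sigma(r)=0$ otherwise; $\varrho(x)=\sigma(\phi(x)/\varepsilon)$. $\mathcal T_h$ is a regular (shape-regular) simplicial partition of $\overline\Omega$ with mesh size $h=\max_T\operatorname{diam}T$. $\widetilde{\mathcal T}_h=\{T\in\mathcal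 T_h:|\phi(b_{i,T})|\le\varepsilon\arccos(h/\varepsilon)\text{ for all }i=1,\dots,L\}$, $D_h=\bigcup_{T\in\widetilde{\mathcal T}_h}T$, and $\widetilde V_h=\{v\in C(D_h): v\text{ affine on each }T\in\widetilde{\mathcal T}_h\}$. *)

(* Defs.v *)
From HB Require Import structures.
From mathcomp Require Import all_boot all_order all_algebra.
From mathcomp Require Import all_classical all_reals all_analysis.
Set Implicit Arguments. Unset Strict Implicit. Unset Printing Implicit Defensive.
Import Order.TTheory GRing.Theory Num.Theory.
Import numFieldNormedType.Exports.
Local Open Scope classical_set_scope.
Local Open Scope ring_scope.

Section Defs.
Variables (R : realType) (d : nat).
Notation pt := 'rV[R]_d.

Definition enorm (x : pt) : R := Num.sqrt (\sum_i x ord0 i ^+ 2).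

Definition conv (S : set pt) : set pt :=
  [set x | exists (k : nat) (P : 'I_k -> pt) (l : 'I_k -> R),
     (forall i, S (P i)) /\ (forall i, 0 <= l i) /\ \sum_i l i = 1 /\
     x = \sum_i l i *: P i].

Definition simplex := 'I_d.+1 -> pt.
Definition sset (T : simplex) : set pt := conv (range T).

Definition edge_mx (T : simplex) : 'M[R]_d :=
  \matrix_(j, k) (T (lift ord0 j) ord0 k - T ord0 ord0 k).
Definition nondegenerate (T : simplex) : Prop := \det (edge_mx T) != 0.

(* Affine map Phi_T of the reference simplex onto T. *)
Definition affmap (T : simplex) (xh : pt) : pt := T ord0 + xh *m edge_mx T.

Definition ref_simplex : set pt :=
  [set x | (forall i, 0 <= x ord0 i) /\ \sum_i x ord0 i <= 1].

(* Iterated Lebesgue integral over the simplex {t_i >= 0, sum t_i <= s}. *)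
Fixpoint iint (k : nat) (s : R) (g : seq R -> R) : R :=
  match k with
  | 0 => g [::]
  | k'.+1 => Rintegral lebesgue_measure `[0, s]%classic
               (fun t => iint k' (s - t) (fun l => g (t :: l)))
  end.

Definition refint (f : pt -> R) : R :=
  iint d 1 (fun l => f (\row_i nth 0 l i)).

(* Integral over T, via the affine change of variables Phi_T. *)
Definition intT (T : simplex) (g : pt -> R) : R :=
  `|\det (edge_mx T)| * refint (g \o affmap T).
Definition vol (T : simplex) : R := intT T (fun _ => 1).

Definition poly_le (q : nat) (p : pt -> R) : Prop :=
  exists c : {ffun 'I_d -> 'I_q.+1} -> R, forall x,
    p x = \sum_(a : {ffun 'I_d -> 'I_q.+1} | (\sum_i (a i : nat) <= q)%N) c a * \prod_i x ord0 i ^+ a i.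

Definition quad_exact (q L : nat) (w : 'I_L -> R) (bh : 'I_L -> pt) : Prop :=
  forall p, poly_le q p -> refint p = refint (fun _ => 1) * \sum_i w i * p (bh i).

Definition QT (L : nat) (w : 'I_L -> R) (bh : 'I_L -> pt) (T : simplex)
  (g : pt -> R) : R := vol T * \sum_i w i * g (affmap T (bh i)).

Definition sigma (q : nat) (r : R) : R :=
  if `|r| <= pi / 2 then cos r ^+ (q.+1).*2 else 0.
Definition rho (q : nat) (phi : pt -> R) (eps : R) (x : pt) : R :=
  sigma q (phi x / eps).

Definition unitv (k : 'I_d) : pt := delta_mx ord0 k.
Definition gradnorm (f : pt -> R) (x : pt) : R :=
  Num.sqrt (\sum_k ('D_(unitv k) f x) ^+ 2).

Fixpoint dirder (vs : seq pt) (f : pt -> R) : pt -> R :=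
  if vs is v :: vs' then (fun x => 'D_v (dirder vs' f) x) else f.
Definition smooth_on (U : set pt) (f : pt -> R) : Prop :=
  forall vs, (forall x, U x -> {for x, continuous (dirder vs f)}) /\
             (forall v x, U x -> derivable (dirder vs f) x v).

Definition polyhedral_domain (Om : set pt) : Prop :=
  open Om /\ connected Om /\ Om !=set0 /\ bounded_set Om /\
  exists (k : nat) (S : 'I_k -> simplex), (forall i, nondegenerate (S i)) /\
    closure Om = [set x | exists i, sset (S i) x].

Definition diam (S : set pt) : R :=
  sup [set r | exists x y, S x /\ S y /\ r = enorm (x - y)].
Definition inradius (S : set pt) : R :=
  sup [set r | 0 < r /\ exists c, [set x | enorm (x - c) < r] `<=` S].

Definition is_mesh (Om : set pt) (nT : nat) (M : 'I_nT -> simplex) : Prop :=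
  (forall i, nondegenerate (M i)) /\
  [set x | exists i, sset (M i) x] = closure Om /\
  (forall i j, i != j -> sset (M i) <> sset (M j) /\
      sset (M i) `&` sset (M j) = conv (range (M i) `&` range (M j))).

Definition meshsize (nT : nat) (M : 'I_nT -> simplex) : R :=
  \big[Num.max/0]_i diam (sset (M i)).

Definition shape_bounded (sg : R) (nT : nat) (M : 'I_nT -> simplex) : Prop :=
  forall i, diam (sset (M i)) <= sg * inradius (sset (M i)).

Definition Ttilde (phi : pt -> R) (L : nat) (bh : 'I_L -> pt) (eps h : R)
  (T : simplex) : bool :=
  [forall l, `|phi (affmap T (bh l))| <= eps * acos (h / eps)].

Definition Dh (phi : pt -> R) (L : nat) (bh : 'I_L -> pt) (eps h : R)
  (nT : nat) (M : 'I_nT -> simplex) : set pt :=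
  [set x | exists i, Ttilde phi bh eps h (M i) /\ sset (M i) x].

Definition in_Vtilde (phi : pt -> R) (L : nat) (bh : 'I_L -> pt) (eps h : R)
  (nT : nat) (M : 'I_nT -> simplex) (v : pt -> R) : Prop :=
  {within Dh phi bh eps h M, continuous v} /\
  forall i, Ttilde phi bh eps h (M i) ->
    exists (a : R) (b : pt), forall x, sset (M i) x ->
      v x = a + \sum_k x ord0 k * b ord0 k.

Definition gradT (T : simplex) (v : pt -> R) : pt :=
  (invmx (edge_mx T) *m \col_j (v (T (lift ord0 j)) - v (T ord0)))^T.

(* Squared H^1(T) norm of the affine function v|_T. *)
Definition H1sq (T : simplex) (v : pt -> R) : R :=
  intT T (fun x => v x ^+ 2 + enorm (gradT T v) ^+ 2).

Definition supnormT (T : simplex) (f : pt -> R) : R :=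
  sup [set r | exists x, sset T x /\ r = `|f x|].

Definition hnorm2 (phi : pt -> R) (q L : nat) (w : 'I_L -> R) (bh : 'I_L -> pt)
  (eps h : R) (nT : nat) (M : 'I_nT -> simplex) (v : pt -> R) : R :=
  eps^-1 * \sum_(i | Ttilde phi bh eps h (M i))
     QT w bh (M i) (fun x => rho q phi eps x * (v x ^+ 2 + enorm (gradT (M i) v) ^+ 2)).

Definition lhs4 (phi : pt -> R) (q L : nat) (bh : 'I_L -> pt)
  (eps h : R) (nT : nat) (M : 'I_nT -> simplex) (v : pt -> R) : R :=
  eps^-1 * \sum_(i | Ttilde phi bh eps h (M i))
     supnormT (M i) (rho q phi eps) * H1sq (M i) v.

End Defs.

(* Main.v *)
Require Import Defs.
From HB Require Import structures.
From mathcomp Require Import all_boot all_order all_algebra.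
From mathcomp Require Import all_classical all_reals all_analysis.
From mathcomp Require Import ring lra.
Set Implicit Arguments. Unset Strict Implicit. Unset Printing Implicit Defensive.
Import Order.TTheory GRing.Theory Num.Theory.
Import numFieldNormedType.Exports.
Local Open Scope classical_set_scope.
Local Open Scope ring_scope.

Section Dir.
Variables (R : realType) (V : normedModType R).
Implicit Types (f : V -> R).

Lemma quot_shift f x v s0 :
  (fun h : R => h^-1 *: (((fun s : R => f (s *: v + x)) \o shift s0) (h *: (1:R)) - f (s0 *: v + x)))
  = (fun h : R => h^-1 *: ((f \o shift (s0 *: v + x)) (h *: v) - f (s0 *: v + x))).
Proof.
apply: funext => h /=; congr (_ *: (f _ - _)).
by rewrite /= [_%:A]mulr1 scalerDl addrA.
Qed.

Lemma derivable_shift f x v s0 :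
  derivable f (s0 *: v + x) v -> derivable (fun s : R => f (s *: v + x)) s0 1.
Proof. by rewrite /derivable quot_shift. Qed.

Lemma derive_shift f x v s0 :
  'D_1 (fun s : R => f (s *: v + x)) s0 = 'D_v f (s0 *: v + x).
Proof. by rewrite /derive quot_shift. Qed.

Lemma derive_dir0 f x : 'D_0 f x = 0.
Proof.
rewrite /derive.
have -> : (fun h : R => h^-1 *: ((f \o shift x) (h *: (0:V)) - f x)) = fun=> 0.
  by apply: funext => h /=; rewrite scaler0 add0r subrr scaler0.
exact: lim_cst.
Qed.

End Dir.

Section Dir2.
Variables (R : realType) (V : normedModType R).
Implicit Types (f : V -> R).

Lemma Q1_cvg f (U : set V) z a b :
  open U -> U z -> (forall w, U w -> derivable f w b) ->
  {for z, continuous ('D_b f)} ->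
  (fun h : R => h^-1 *: (f (h *: b + (h *: a + z)) - f (h *: a + z))) @ 0^'
    --> 'D_b f z.
Proof.
move=> oU Uz dU cz.
apply/cvgrPdist_lt => e e0.
have : \forall w \near z, U w /\ `|'D_b f z - 'D_b f w| < e.
  near=> w; split; last by near: w; apply: cvgr_dist_lt.
  by near: w; apply: open_nbhs_nbhs; split.
move=> /nbhs_normP [del del0 Hdel].
rewrite /dnbhs /within; apply/nbhs_normP.
set r := del / (`|a| + `|b| + 1).
have abp : 0 < `|a| + `|b| + 1 by rewrite ltr_wpDl // addr_ge0.
exists r => /=; first by rewrite /r divr_gt0.
move=> t /=; rewrite sub0r normrN => Ht tneq0.
have Hta : `|t| * (`|a| + `|b|) < del.
  apply: (le_lt_trans (y := `|t| * (`|a| + `|b| + 1))).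
    by rewrite ler_wpM2l // lerDl.
  by rewrite -ltr_pdivlMr.
have Hpt : forall s, `|s| <= `|t| ->
    U (s *: b + (t *: a + z)) /\ `|'D_b f z - 'D_b f (s *: b + (t *: a + z))| < e.
  move=> s hs; apply: Hdel => /=.
  rewrite addrA [_ + z]addrC opprD addrA subrr sub0r normrN.
  apply: le_lt_trans Hta.
  apply: (le_trans (ler_normD _ _)); rewrite !normrZ mulrDr addrC.
  by rewrite lerD2l ler_wpM2r.
pose F := fun s : R => f (s *: b + (t *: a + z)).
pose df := fun s : R => 'D_b f (s *: b + (t *: a + z)).
have isd : forall s : R, `|s| <= `|t| -> is_derive s (1:R) F (df s).
  move=> s hs; have [Us _] := Hpt s hs; split.
    exact/derivable_shift/dU.
  by rewrite derive_shift.
have F0 : F 0 = f (t *: a + z) by rewrite /F scale0r add0r.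
have key : exists2 c, `|c| <= `|t| & F t - F 0 = df c * t.
  have [tneg|tpos] := ltP t 0.
    have := @MVT_segment R F df t 0 (ltW tneg).
    case.
    - move=> x /[!in_itv] /= /andP[xa xb]; apply: isd.
      by rewrite (ltr0_norm xb) (ltr0_norm tneg) lerN2 ltW.
    - apply: derivable_within_continuous => x /[!in_itv] /= /andP[xa xb].
      apply: (@ex_derive _ _ _ _ _ _ (df x)); apply: isd.
      rewrite (ltr0_norm tneg); case: (ltP x 0) => xn.
        by rewrite ltr0_norm // lerN2.
      have -> : x = 0 by apply/eqP; rewrite eq_le xb xn.
      by rewrite normr0 oppr_ge0 ltW.
    move=> c /[!in_itv] /= /andP[ca cb] hc; exists c.
      rewrite (ltr0_norm tneg) ler0_norm // lerN2 //.
    by rewrite -opprB hc sub0r mulrN opprK.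
  have tpos' : 0 < t by rewrite lt_def tneq0 tpos.
  have := @MVT_segment R F df 0 t tpos.
  case.
  - move=> x /[!in_itv] /= /andP[xa xb]; apply: isd.
    by rewrite !gtr0_norm // ?ltW // (lt_trans xa).
  - apply: derivable_within_continuous => x /[!in_itv] /= /andP[xa xb].
    apply: (@ex_derive _ _ _ _ _ _ (df x)); apply: isd.
    by rewrite (gtr0_norm tpos') ger0_norm.
  move=> c /[!in_itv] /= /andP[ca cb] hc; exists c.
    by rewrite (gtr0_norm tpos') ger0_norm.
  by rewrite hc subr0.
case: key => c hc hF.
have -> : t^-1 *: (f (t *: b + (t *: a + z)) - f (t *: a + z)) = df c.
  rewrite -F0 -/(F t) hF /GRing.scale /= mulrC -mulrA mulfV ?mulr1 //.
by have [_ ->] := Hpt c hc.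
Unshelve. all: by end_near. Qed.

Lemma derive_addv f (U : set V) z a b :
  open U -> U z -> (forall w, U w -> forall v, derivable f w v) ->
  {for z, continuous ('D_b f)} ->
  'D_(a + b) f z = 'D_a f z + 'D_b f z.
Proof.
move=> oU Uz dU cz.
have Qe : (fun h : R => h^-1 *: ((f \o shift z) (h *: (a + b)) - f z)) =
  (fun h : R => h^-1 *: (f (h *: b + (h *: a + z)) - f (h *: a + z))) +
  (fun h : R => h^-1 *: ((f \o shift z) (h *: a) - f z)).
  apply: funext => h; rewrite [RHS]/GRing.add /= -scalerDr; congr (_ *: _).
  by rewrite addrA subrK scalerDr [h *: a + h *: b]addrC -addrA.
have cQ : (fun h : R => h^-1 *: ((f \o shift z) (h *: (a + b)) - f z)) @ 0^'
   --> 'D_b f z + 'D_a f z.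
  rewrite Qe; apply: cvgD; first exact: (@Q1_cvg f U z a b oU Uz (fun w Uw => dU w Uw b) cz).
  exact: (dU z Uz a).
rewrite [LHS]/derive [RHS]addrC; have := @cvg_lim _ _ _ (0:R)^' _ _ _ cQ; apply => //.
Qed.

Lemma derive_scalev f z v (c : R) : derivable f z v ->
  'D_(c *: v) f z = c * 'D_v f z.
Proof.
move=> dv.
have E1 : 'D_v f z = 'D_1 (fun s : R => f (s *: v + z)) 0.
  by rewrite derive_shift scale0r add0r.
have E2 : 'D_(c *: v) f z = 'D_1 (fun s : R => f (s *: (c *: v) + z)) 0.
  by rewrite derive_shift scale0r add0r.
have E3 : (fun s : R => f (s *: (c *: v) + z)) =
          (fun s : R => f (s *: v + z)) \o (c \*: id).
  by apply: funext => s /=; rewrite scalerA mulrC.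
rewrite E2 E3 -derive1E derive1_comp.
- rewrite !derive1E /= scaler0 -E1 mulrC; congr (_ * _).
  by rewrite deriveZ ?derive_id // /GRing.scale /= mulr1.
- exact/derivableZ/derivable_id.
- rewrite /= scaler0; apply: derivable_shift.
  by rewrite scale0r add0r.
Qed.

End Dir2.


Section Lin.
Variables (R : realType) (d : nat).
Implicit Types (f : 'rV[R]_d -> R).

Lemma sq_le_sum (g : 'I_d -> R) k : g k ^+ 2 <= \sum_i g i ^+ 2.
Proof.
rewrite (bigD1 k) //= lerDl; apply: sumr_ge0 => i _; exact: sqr_ge0.
Qed.

Lemma coord_le_sqrt (g : 'I_d -> R) k : `|g k| <= Num.sqrt (\sum_i g i ^+ 2).
Proof.
rewrite -sqrtr_sqr; apply: ler_wsqrtr; exact: sq_le_sum.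
Qed.

Lemma coord_le_enorm (u : 'rV[R]_d) k : `|u ord0 k| <= enorm u.
Proof. exact: (coord_le_sqrt (fun i => u ord0 i)). Qed.

Lemma dot_bound (u : 'rV[R]_d) (g : 'I_d -> R) :
  `|\sum_k u ord0 k * g k| <= d%:R * (enorm u * Num.sqrt (\sum_i g i ^+ 2)).
Proof.
apply: (le_trans (ler_norm_sum _ _ _)).
apply: (le_trans (y := \sum_(k < d) (enorm u * Num.sqrt (\sum_i g i ^+ 2)))).
  apply: ler_sum => k _; rewrite normrM; apply: ler_pM => //.
    exact: coord_le_enorm.
  exact: coord_le_sqrt.
by rewrite sumr_const card_ord mulr_natl.
Qed.

Lemma derive_lin f (U : set 'rV[R]_d) z : open U -> U z ->
  (forall w, U w -> forall v, derivable f w v) ->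
  (forall v, {for z, continuous ('D_v f)}) ->
  forall u, 'D_u f z = \sum_k u ord0 k * 'D_(unitv R k) f z.
Proof.
move=> oU Uz dU cU u.
rewrite {1}(row_sum_delta u).
rewrite (big_morph (fun v => 'D_v f z) (id1 := 0) (op1 := +%R)).
- apply: eq_bigr => k _; rewrite derive_scalev //; exact: dU.
- by move=> a b /=; apply: (derive_addv a oU Uz dU (cU b)).
- exact: (derive_dir0 f z).
Qed.


Lemma enorm_ge0 (u : 'rV[R]_d) : 0 <= enorm u.
Proof. exact: sqrtr_ge0. Qed.

Lemma lip f (U S : set 'rV[R]_d) c1 x y :
  open U -> S `<=` U ->
  (forall w, U w -> forall v, derivable f w v) ->
  (forall v w, U w -> {for w, continuous ('D_v f)}) ->
  (forall w, S w -> gradnorm f w <= c1) ->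
  (forall t : R, 0 <= t <= 1 -> S (t *: (x - y) + y)) ->
  `|f x - f y| <= d%:R * (enorm (x - y) * c1).
Proof.
move=> oU SU dU cU gS seg.
pose G t := f (t *: (x - y) + y).
pose dG t := 'D_(x - y) f (t *: (x - y) + y).
have isd : forall t : R, 0 <= t <= 1 -> is_derive t (1:R) G (dG t).
  move=> t t01; split.
    by apply/derivable_shift/dU/SU/seg.
  by rewrite derive_shift.
have [c c01 hc] : exists2 c, c \in `[(0:R), 1] & G 1 - G 0 = dG c * (1 - 0).
  apply: MVT_segment => //.
    move=> t /[!in_itv] /= /andP[t0 t1]; apply: isd; by rewrite !ltW.
  apply: derivable_within_continuous => t /[!in_itv] /= t01.
  by apply: (@ex_derive _ _ _ _ _ _ (dG t)); apply: isd.
have G1 : G 1 = f x by rewrite /G scale1r subrK.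
have G0 : G 0 = f y by rewrite /G scale0r add0r.
move: c01; rewrite in_itv /= => c01.
have Sc := seg c c01.
rewrite -G1 -G0 hc subr0 mulr1 /dG (derive_lin oU (SU _ Sc) dU) => [|v]; last first.
  exact: cU (SU _ Sc).
apply: le_trans (dot_bound _ _) _.
rewrite ler_wpM2l // ler_wpM2l ?enorm_ge0 //.
exact: gS.
Qed.

End Lin.


Section Int.
Variable (R : realType).
Local Notation mu := (@lebesgue_measure R).

Lemma le_int_ge0 (D D' : set R) (f g : R -> R) : D `<=` D' ->
  (forall x, D x -> 0 <= g x <= f x) -> (forall x, D' x -> 0 <= f x) ->
  (\int[mu]_(x in D) (g x)%:E <= \int[mu]_(x in D') (f x)%:E)%E.
Proof.
move=> DD' gf f0.
have g0' : forall x, D x -> (0 <= (g x)%:E)%E.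
  by move=> x Dx; rewrite lee_fin; case/andP: (gf x Dx).
have f0' : forall x, D' x -> (0 <= (f x)%:E)%E.
  by move=> x Dx; rewrite lee_fin f0.
rewrite ge0_integralE // [X in (_ <= X)%E]ge0_integralE //.
apply: ereal_sup_le => _ [h /= hle <-]; exists h => //= x.
apply: (le_trans (hle x)); rewrite /patch.
case: ifPn => [/[!inE] Dx|_].
  by rewrite mem_set ?lee_fin; [case/andP: (gf x Dx)|exact: DD'].
case: ifPn => [/[!inE] Dx|_] //; by rewrite lee_fin f0.
Qed.

Lemma int_cst_itv (s M : R) : 0 <= s ->
  (\int[mu]_(x in `[0%R, s]) M%:E = (M * s)%:E)%E.
Proof.
move=> s0; rewrite integral_cst //= lebesgue_measure_itv /=.
case: ifPn => [_|]; first by rewrite oppr0 addr0 EFinM.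
rewrite lte_fin -leNgt => s0'; have -> : s = 0 by apply/eqP; rewrite eq_le s0' s0.
by rewrite mule0 mulr0.
Qed.

Lemma Rint_le (D : set R) (s M : R) (f g : R -> R) : 0 <= s -> D `<=` `[0%R, s]%classic ->
  (forall x, D x -> 0 <= g x <= f x) -> (forall x, `[0%R, s]%classic x -> 0 <= f x <= M) ->
  Rintegral mu D g <= Rintegral mu `[0%R, s]%classic f.
Proof.
move=> s0 DD gf fM.
have h0 : `[0%R, s]%classic 0 by rewrite /= in_itv /= lexx s0.
have M0 : 0 <= M by have /andP[a b] := fM 0 h0; exact: le_trans b.
have i1 := le_int_ge0 DD gf (fun x Dx => proj1 (andP (fM x Dx))).
have i2 : (\int[mu]_(x in `[0%R, s]%classic) (f x)%:E <= (M * s)%:E)%E.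
  rewrite -int_cst_itv //; apply: (@le_int_ge0 _ _ (fun=> M) f) => //.
have i0 : (0 <= \int[mu]_(x in D) (g x)%:E)%E.
  by apply: integral_ge0 => x Dx; rewrite lee_fin; case/andP: (gf x Dx).
apply: fine_le.
- by rewrite ge0_fin_numE // (le_lt_trans i1) // (le_lt_trans i2) // ltry.
- by rewrite ge0_fin_numE ?(le_trans i0 i1) // (le_lt_trans i2) // ltry.
exact: i1.
Qed.

End Int.

Section IInt.
Variable (R : realType).

Definition idom (k : nat) (s : R) (l : seq R) : Prop :=
  size l = k /\ (forall x, x \in l -> 0 <= x) /\ \sum_(x <- l) x <= s.

Lemma idom_cons k s t l : 0 <= t -> idom k (s - t) l -> idom k.+1 s (t :: l).
Proof.
move=> t0 [sz [pos sm]]; split; first by rewrite /= sz.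
split; first by move=> x; rewrite inE => /orP[/eqP->|/pos].
by rewrite big_cons -lerBrDl.
Qed.

Lemma Rint_cst_itv (s c : R) : 0 <= s ->
  Rintegral lebesgue_measure `[0%R, s]%classic (fun=> c) = c * s.
Proof. by move=> s0; rewrite /Rintegral int_cst_itv. Qed.

Lemma iint_ub k : forall s g M, 0 <= s -> 0 <= M ->
  (forall l, idom k s l -> 0 <= g l <= M) -> 0 <= iint k s g <= M * s ^+ k.
Proof.
elim: k => [|k IH] s g M s0 M0 gM /=.
  rewrite expr0 mulr1; apply: gM; split => //; split => //.
  by rewrite big_nil.
have inner : forall t, `[0%R, s]%classic t ->
    0 <= iint k (s - t) (fun l => g (t :: l)) <= M * s ^+ k.
  move=> t; rewrite /= in_itv /= => /andP[t0 ts].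
  have st0 : 0 <= s - t by rewrite subr_ge0.
  have /andP[a b] := IH (s - t) (fun l => g (t :: l)) M st0 M0
    (fun l dl => gM _ (idom_cons t0 dl)).
  rewrite a /=; apply: (le_trans b); rewrite ler_wpM2l //.
  by rewrite lerXn2r // ?nnegrE // lerBlDr lerDl.
apply/andP; split.
  by apply: Rintegral_ge0 => t /inner /andP[].
rewrite exprSr mulrA -(Rint_cst_itv (M * s ^+ k) s0).
apply: (@Rint_le _ _ s (M * s ^+ k)) => //.
by move=> t _; rewrite lexx andbT mulr_ge0 // exprn_ge0.
Qed.


Lemma iint_lb k : exists2 a : R, 0 < a &
  forall s, 0 <= s -> a * s ^+ k <= iint k s (fun=> 1).
Proof.
elim: k => [|k [a a0 IH]]; first by exists 1 => // s _; rewrite /= expr0 mulr1.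
exists (a / 2 ^+ k.+1); first by rewrite divr_gt0 // exprn_gt0.
move=> s s0 /=.
have s20 : 0 <= s / 2 by rewrite divr_ge0.
have inner : forall t, `[0%R, s]%classic t ->
    0 <= iint k (s - t) (fun=> 1) <= s ^+ k.
  move=> t; rewrite /= in_itv /= => /andP[t0 ts].
  have st0 : 0 <= s - t by rewrite subr_ge0.
  have /andP[-> b] := @iint_ub k (s - t) (fun=> 1) 1 st0 ler01
    (fun l _ => introT andP (conj ler01 (lexx 1))).
  rewrite /= (le_trans b) // mul1r.
  by rewrite lerXn2r // ?nnegrE // lerBlDr lerDl.
apply: (@le_trans _ _ (Rintegral lebesgue_measure `[0%R, s / 2]%classic
   (fun=> a * (s / 2) ^+ k))).
  rewrite Rint_cst_itv //; suff -> : a * (s / 2) ^+ k * (s / 2) = a / 2 ^+ k.+1 * s ^+ k.+1 by [].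
  by rewrite -mulrA -exprSr expr_div_n mulrA mulrAC.
apply: (@Rint_le R `[0%R, s/2]%classic s (s^+k) (fun t => iint k (s - t) (fun=> 1)) (fun=> a * (s/2)^+k)) => //.
- move=> t /=; rewrite !in_itv /= => /andP[-> ts] /=.
  lra.
- move=> t; rewrite /= in_itv /= => /andP[t0 ts].
  rewrite mulr_ge0 ?exprn_ge0 ?(ltW a0) //=.
  apply: (le_trans _ (IH (s - t) _)); last first.
    rewrite subr_ge0; lra.
  rewrite ler_wpM2l ?(ltW a0) // lerXn2r // ?nnegrE ?subr_ge0 //.
  + lra.
  + lra.
Qed.

End IInt.


Section Ref.
Variables (R : realType) (n : nat).

Lemma idom_ref (l : seq R) : idom n 1 l -> ref_simplex (\row_(i < n) nth 0 l i).
Proof.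
move=> [sz [pos sm]]; split.
  move=> i; rewrite mxE; apply: pos; apply: mem_nth; by rewrite sz.
suff -> : \sum_i (\row_(i < n) nth 0 l i) ord0 i = \sum_(x <- l) x by [].
rewrite (big_nth 0) sz big_mkord; apply: eq_bigr => i _; by rewrite mxE.
Qed.

Lemma refint_ub (F : 'rV[R]_n -> R) M : 0 <= M ->
  (forall x, ref_simplex x -> 0 <= F x <= M) -> refint F <= M.
Proof.
move=> M0 FM.
have /andP[_ h] := @iint_ub R n 1 (fun l => F (\row_i nth 0 l i)) M ler01 M0
  (fun l dl => FM _ (idom_ref dl)).
by rewrite /refint (le_trans h) // expr1n mulr1.
Qed.

Lemma refint1_pos : 0 < refint (fun _ : 'rV[R]_n => 1).
Proof.
have [a a0 h] := @iint_lb R n.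
apply: (lt_le_trans a0); have := h 1 ler01; by rewrite expr1n mulr1.
Qed.

End Ref.

Section Geo.
Variables (R : realType) (d : nat).
Local Notation pt := 'rV[R]_d.

Lemma conv_convex (S : set pt) x y (t : R) : Defs.conv S x -> Defs.conv S y ->
  0 <= t <= 1 -> Defs.conv S (t *: (x - y) + y).
Proof.
move=> [k1 [P1 [l1 [SP1 [l10 [l11 ->]]]]]] [k2 [P2 [l2 [SP2 [l20 [l21 ->]]]]]].
move=> /andP[t0 t1].
have sl : forall i : 'I_k1, fintype.split (lshift k2 i) = inl i := fun i => unsplitK (inl i).
have sr : forall i : 'I_k2, fintype.split (rshift k1 i) = inr i := fun i => unsplitK (inr i).
exists (k1 + k2)%N.
exists (fun i => match fintype.split i with inl a => P1 a | inr b => P2 b end).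
exists (fun i => match fintype.split i with inl a => t * l1 a | inr b => (1 - t) * l2 b end).
split; first by move=> i; case: (fintype.split i).
split; first by move=> i; case: (fintype.split i) => a; apply: mulr_ge0 => //; lra.
split.
  rewrite big_split_ord /=.
  under eq_bigr do rewrite sl.
  under [X in _ + X]eq_bigr do rewrite sr.
  by rewrite -!mulr_sumr l11 l21; ring.
rewrite big_split_ord /=.
rewrite [X in _ = X + _](eq_bigr (fun i => t *: (l1 i *: P1 i))); last first.
  by move=> i _; rewrite sl scalerA.
rewrite [X in _ = _ + X](eq_bigr (fun i => (1 - t) *: (l2 i *: P2 i))); last first.
  by move=> i _; rewrite sr scalerA.
rewrite -!scaler_sumr scalerBr scalerBl scale1r.
by rewrite -addrA [- _ + _]addrC.
Qed.


Lemma row_edge (T : simplex R d) i :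
  row i (edge_mx T) = T (lift ord0 i) - T ord0.
Proof. by apply/rowP => k; rewrite !mxE. Qed.

Lemma affmapE (T : simplex R d) (xi : pt) :
  affmap T xi = T ord0 + \sum_i xi ord0 i *: (T (lift ord0 i) - T ord0).
Proof.
rewrite /affmap mulmx_sum_row; congr (_ + _); apply: eq_bigr => i _.
by rewrite row_edge.
Qed.

Lemma affmap_in (T : simplex R d) xi : ref_simplex xi -> sset T (affmap T xi).
Proof.
move=> [xi0 xi1].
pose l := fun j : 'I_d.+1 => match unlift ord0 j with
  Some i => xi ord0 i | None => 1 - \sum_i xi ord0 i end.
have l0 : l ord0 = 1 - \sum_i xi ord0 i by rewrite /l unlift_none.
have lS : forall i, l (lift ord0 i) = xi ord0 i by move=> i; rewrite /l liftK.
exists d.+1, T, l; split; first by move=> i; exists i.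
split.
  move=> j; rewrite /l; case: (unlift ord0 j) => [i|]; first exact: xi0.
  by rewrite subr_ge0.
split; first by rewrite big_ord_recl l0; under [X in _ + X = _]eq_bigr do rewrite lS; rewrite subrK.
rewrite big_ord_recl l0 affmapE; under [X in _ = _ + X]eq_bigr do rewrite lS.
rewrite scalerBl scale1r -addrA; congr (_ + _).
rewrite (eq_bigr (fun i => xi ord0 i *: T (lift ord0 i) - xi ord0 i *: T ord0)); last by move=> i _; rewrite scalerBr.
by rewrite sumrB scaler_suml addrC.
Qed.

End Geo.


Section Bnd.
Variables (R : realType) (d : nat).
Local Notation pt := 'rV[R]_d.

Lemma coord_le_norm (v : pt) i : `|v ord0 i| <= `|v|.
Proof.
have /mapP[j Hj ->] : `|v ord0 i| \in [seq `|v x.1 x.2| | x : 'I_1 * 'I_d].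
  by apply/mapP; exists (ord0, i) => //=; rewrite mem_enum.
by rewrite [leRHS]/Num.norm /= mx_normrE; apply/bigmax_geP; right => /=; exists j.
Qed.

Lemma closure_bounded (A : set pt) : bounded_set A ->
  exists2 B : R, 0 < B & forall x, closure A x -> forall k, `|x ord0 k| <= B.
Proof.
move=> [M [Mreal HM]].
have rM : M < `|M| + 1 by rewrite (le_lt_trans (real_ler_norm Mreal)) // ltrDl.
have HA := HM _ rM.
exists (`|M| + 2); first by rewrite ltr_wpDl.
move=> x cx k; apply: le_trans (coord_le_norm x k) _.
have : closed_ball (0 : pt) (`|M| + 2) x.
  apply: closureS cx => y Ay; rewrite -ball_normE /= sub0r normrN.
  by rewrite (le_lt_trans (HA y Ay)) // ltrD2l ltr1n.
rewrite closed_ballE ?ltr_wpDl // /closed_ball_ /= sub0r normrN //.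
Qed.


Lemma vertex_in (T : simplex R d) j : sset T (T j).
Proof.
exists 1%N, (fun=> T j), (fun=> 1); split; first by move=> _; exists j.
split => //; split; first by rewrite big_ord1.
by rewrite big_ord1 scale1r.
Qed.

Lemma gradT_affine (T : simplex R d) (v : pt -> R) a (b : pt) :
  Defs.nondegenerate T ->
  (forall x, sset T x -> v x = a + \sum_k x ord0 k * b ord0 k) ->
  gradT T v = b.
Proof.
move=> nd hv.
rewrite /gradT; set c := (X in invmx _ *m X).
have -> : c = edge_mx T *m b^T.
  apply/colP => j; rewrite !mxE !hv; try exact: vertex_in.
  rewrite opprD addrACA subrr add0r -sumrB.
  by apply: eq_bigr => k _; rewrite !mxE mulrBl.
rewrite mulKmx ?trmxK //.
by rewrite unitmxE unitfE.
Qed.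

Lemma affine_diff (T : simplex R d) (v : pt -> R) a (b : pt) x y :
  (forall x, sset T x -> v x = a + \sum_k x ord0 k * b ord0 k) ->
  sset T x -> sset T y ->
  v x = v y + \sum_k (x - y) ord0 k * b ord0 k.
Proof.
move=> hv Tx Ty; rewrite !hv // -addrA; congr (_ + _).
rewrite -big_split /=; apply: eq_bigr => k _; rewrite !mxE; ring.
Qed.

End Bnd.


Section Trig.
Variable (R : realType).

Lemma cos_lip_le (a b : R) : a <= b -> `|cos b - cos a| <= b - a.
Proof.
move=> ab.
have [c _ ->] := @MVT_segment R cos (fun x => - sin x) a b ab
  (fun x _ => is_derive_cos x) (continuous_subspaceT (fun x => @continuous_cos R x)).
rewrite normrM normrN ger0_norm ?subr_ge0 //.
by rewrite ler_piMl ?subr_ge0 // sin_max.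
Qed.

Lemma cos_lip (a b : R) : `|cos a - cos b| <= `|a - b|.
Proof.
have [ab|ba] := leP a b.
  by rewrite (distrC (cos a)) (distrC a) [`|b - a|]ger0_norm ?subr_ge0 // cos_lip_le.
by rewrite [`|a - b|]gtr0_norm ?subr_gt0 // cos_lip_le // ltW.
Qed.

Lemma acos_le_pihalf (r : R) : 0 <= r <= 1 -> acos r <= pi / 2.
Proof.
move=> /andP[r0 r1].
have r11 : -1 <= r <= 1 by rewrite r1 andbT (le_trans _ r0) // lerN10.
rewrite leNgt; apply/negP => h.
have : cos (acos r) < cos (pi / 2).
  rewrite ltr_cos // ?in_itv /= ?acos_ge0 ?acos_lepi //.
  by rewrite divr_ge0 ?pi_ge0 //= ler_pdivrMr // ler_peMr ?pi_ge0 // ler1n.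
by rewrite acosK ?in_itv //= cos_pihalf ltNge r0.
Qed.

Lemma cos_ge_acos (r t : R) : 0 <= r <= 1 -> `|t| <= acos r -> r <= cos t.
Proof.
move=> /andP[r0 r1] ht.
have r11 : -1 <= r <= 1 by rewrite r1 andbT (le_trans _ r0) // lerN10.
rewrite -cos_norm; move: ht; rewrite le_eqVlt => /orP[/eqP->|ht].
  by rewrite acosK ?in_itv.
apply: ltW; rewrite -{1}(acosK (x:=r)) ?in_itv //.
rewrite ltr_cos // ?in_itv /= ?acos_ge0 ?acos_lepi // normr_ge0 /=.
by rewrite (le_trans (ltW ht)) // acos_lepi.
Qed.

Lemma sigma_bound q (t t0 r Kc : R) : 0 < r <= 1 -> `|t0| <= acos r ->
  0 <= Kc -> `|t - t0| <= Kc * r ->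
  `|sigma q t| <= (1 + Kc) ^+ (q.+1).*2 * sigma q t0.
Proof.
move=> /andP[r0 r1] ht0 K0 htt.
have r01 : 0 <= r <= 1 by rewrite ltW.
have ct0 := cos_ge_acos r01 ht0.
have s0 : sigma q t0 = cos t0 ^+ (q.+1).*2.
  rewrite /sigma ifT //; apply: le_trans ht0 _; exact: acos_le_pihalf.
rewrite s0 -exprMn.
apply: (@le_trans _ _ (`|cos t| ^+ (q.+1).*2)).
  rewrite /sigma; case: ifP => _; first by rewrite normrX.
  by rewrite normr0 exprn_ge0.
have ct00 : 0 <= cos t0 by apply: le_trans ct0; apply: ltW.
rewrite lerXn2r // ?nnegrE ?mulr_ge0 ?addr_ge0 //.
have h1 : `|cos t| <= `|cos t0| + `|cos t - cos t0|.
  by rewrite -{1}(subrK (cos t0) (cos t)) addrC ler_normD.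
apply: (le_trans h1); rewrite ger0_norm ?(le_trans (ltW r0)) //.
have := cos_lip t t0.
have : Kc * r <= Kc * cos t0 by rewrite ler_wpM2l.
lra.
Qed.

End Trig.

Section Elem.
Variables (R : realType) (d : nat).
Local Notation pt := 'rV[R]_d.

Lemma elem_bound (T : simplex R d) (v : pt -> R) (rhof : pt -> R) (L : nat)
  (w : 'I_L -> R) (bh : 'I_L -> pt) (l0 : 'I_L) (K2 H0 : R) :
  Defs.nondegenerate T ->
  (exists a (b : pt), forall x, sset T x -> v x = a + \sum_k x ord0 k * b ord0 k) ->
  (forall x y, sset T x -> sset T y -> enorm (x - y) <= H0) ->
  (forall x, sset T x -> `|rhof x| <= K2 * rhof (affmap T (bh l0))) ->
  (forall x, 0 <= rhof x) ->
  0 <= K2 -> 0 < w l0 -> (forall l, 0 <= w l) -> (forall l, ref_simplex (bh l)) ->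
  supnormT T rhof * H1sq T v <=
  ((2 * (d%:R * H0) ^+ 2 + 2) * K2 / (w l0 * refint (fun _ : pt => 1))) *
    QT w bh T (fun x => rhof x * (v x ^+ 2 + enorm (gradT T v) ^+ 2)).
Proof.
move=> nd [a [b hv]] hH0 hrho rho0 K20 w0 wge0 bhr.
have hg := gradT_affine nd hv.
set y := affmap T (bh l0).
have Ty : sset T y by apply: affmap_in.
set S := supnormT T rhof.
set Sset := [set r | exists x, sset T x /\ r = `|rhof x|].
have Sne : Sset !=set0 by exists `|rhof y|; exists y.
have Sub : ubound Sset (K2 * rhof y) by move=> r [x [Tx ->]]; exact: hrho.
have SK : S <= K2 * rhof y by apply: ge_sup.
have S0 : 0 <= S.
  apply: (le_trans (normr_ge0 (rhof y))).
  apply: (sup_upper_bound (conj Sne (ex_intro _ _ Sub))); by exists y.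
set G := enorm (gradT T v) ^+ 2.
have G0 : 0 <= G by rewrite /G exprn_ge0 // sqrtr_ge0.
set P := v y ^+ 2 + G.
have P0 : 0 <= P by rewrite addr_ge0 // sqr_ge0.
have H00 : 0 <= H0 by apply: le_trans (hH0 y y Ty Ty); exact: sqrtr_ge0.
set A0 := 2 * (d%:R * H0) ^+ 2 + 2.
have A00 : 0 <= A0 by rewrite addr_ge0 // mulr_ge0 // sqr_ge0.
have R1 : refint ((fun x => v x ^+ 2 + enorm (gradT T v) ^+ 2) \o affmap T) <= A0 * P.
  apply: refint_ub; first by rewrite mulr_ge0.
  move=> xi rxi /=; set x := affmap T xi.
  have Tx : sset T x by apply: affmap_in.
  rewrite addr_ge0 ?sqr_ge0 //=.
  rewrite (affine_diff hv Tx Ty).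
  set D := \sum_k _.
  have hD : `|D| <= d%:R * (enorm (x - y) * enorm b) by apply: dot_bound.
  have hD2 : `|D| <= d%:R * H0 * Num.sqrt G.
    rewrite /G sqrtr_sqr [`|enorm _|]ger0_norm ?sqrtr_ge0 // hg.
    apply: (le_trans hD); rewrite -mulrA ler_wpM2l // ler_wpM2r ?sqrtr_ge0 //.
    exact: hH0.
  have hD3 : D ^+ 2 <= (d%:R * H0) ^+ 2 * G.
    rewrite -real_normK ?num_real //.
    apply: (@le_trans _ _ ((d%:R * H0 * Num.sqrt G) ^+ 2)).
      by rewrite lerXn2r // ?nnegrE // mulr_ge0 // ?sqrtr_ge0 // mulr_ge0.
    by rewrite exprMn sqr_sqrtr.
  rewrite /A0 /P -/G.
  set X := (d%:R * H0) ^+ 2.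
  have X0 : 0 <= X by rewrite sqr_ge0.
  have := sqr_ge0 (v y - D).
  have := mulr_ge0 X0 (sqr_ge0 (v y)).
  move=> h1 h2; rewrite -/X in hD3; move: hD3 G0 h1 h2; clear; lra.
rewrite /H1sq /QT /vol /intT.
have -> : refint ((fun=> 1) \o affmap T) = refint (fun _ : pt => 1) by [].
set Dt := `|\det (edge_mx T)|.
set a1 := refint (fun _ : pt => 1).
have a10 : 0 < a1 by apply: refint1_pos.
have Dt0 : 0 <= Dt by apply: normr_ge0.
set Sig := \sum_i _.
have hSig : w l0 * (rhof y * P) <= Sig.
  rewrite /Sig (bigD1 l0) //= lerDl; apply: sumr_ge0 => l _.
  by rewrite mulr_ge0 // mulr_ge0 // addr_ge0 // sqr_ge0.
apply: (@le_trans _ _ (S * (Dt * (A0 * P)))).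
  by rewrite ler_wpM2l // ler_wpM2l.
apply: (@le_trans _ _ (K2 * rhof y * (Dt * (A0 * P)))).
  by rewrite ler_wpM2r // mulr_ge0 // mulr_ge0.
have -> : K2 * rhof y * (Dt * (A0 * P)) =
   A0 * K2 / (w l0 * a1) * (Dt * a1 * (w l0 * (rhof y * P))).
  by field; rewrite !gt_eqF.
rewrite ler_wpM2l //.
- by rewrite divr_ge0 ?mulr_ge0 // ltW // mulr_gt0.
- by rewrite ler_wpM2l // mulr_ge0 // ltW.
Qed.

End Elem.

Lemma le_diam (R : realType) d (S : set 'rV[R]_d) H0 x y :
  (forall x y, S x -> S y -> enorm (x - y) <= H0) -> S x -> S y ->
  enorm (x - y) <= diam S.
Proof.
move=> hH Sx Sy; apply: sup_upper_bound; last by exists x, y.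
split; first by exists (enorm (x - y)); exists x, y.
by exists H0 => r [x' [y' [Sx' [Sy' ->]]]]; exact: hH.
Qed.

Lemma sigma_ge0 (R : realType) q (r : R) : 0 <= sigma q r.
Proof. rewrite /sigma; case: ifP => _ //; apply: exprn_even_ge0; by rewrite odd_double. Qed.

Theorem mainTheorem4 (R : realType) (n : nat) (Omega : set 'rV[R]_n.+1)
  (phi : 'rV[R]_n.+1 -> R) (c0 c1 : R) (q L : nat) (w : 'I_L -> R)
  (bh : 'I_L -> 'rV[R]_n.+1) (sg : R) :
  ((n == 1) || (n == 2))%N ->
  polyhedral_domain Omega ->
  (exists U, open U /\ closure Omega `<=` U /\ smooth_on U phi) ->
  0 < c0 ->
  (forall x, closure Omega x -> c0 <= gradnorm phi x <= c1) ->
  (forall i, 0 < w i) -> \sum_i w i = 1 ->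
  (forall i, ref_simplex (bh i)) -> quad_exact q w bh ->
  exists C : R, forall (h eps : R) (nT : nat)
    (M : 'I_nT -> simplex R n.+1) (v : 'rV[R]_n.+1 -> R),
    0 < h -> h < eps ->
    is_mesh Omega M -> meshsize M = h -> shape_bounded sg M ->
    in_Vtilde phi bh eps h M v ->
    lhs4 phi q bh eps h M v <= C * hnorm2 phi q w bh eps h M v.
Proof.
case: L w bh => [|L] w bh hn pd [U [oU [cU smU]]] c00 hgrad w0 w1 bhr qe.
  by move: w1; rewrite big_ord0 => /eqP; rewrite eq_sym oner_eq0.
set l0 : 'I_L.+1 := ord0.
have [B B0 hB] := closure_bounded pd.2.2.2.1.
set H0 := Num.sqrt (\sum_(k < n.+1) (2 * B) ^+ 2).
have hH0 : forall x y, closure Omega x -> closure Omega y -> enorm (x - y) <= H0.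
  move=> x y cx cy; apply: ler_wsqrtr; apply: ler_sum => k _.
  rewrite -real_normK ?num_real // lerXn2r // ?nnegrE ?mulr_ge0 ?(ltW B0) //.
  rewrite !mxE; have := hB x cx k; have := hB y cy k.
  have := ler_normB (x ord0 k) (y ord0 k); lra.
have c10 : 0 < c1.
  have [x0 Ox0] := pd.2.2.1.
  have /andP[h1 h2] := hgrad x0 (subset_closure Ox0).
  exact: lt_le_trans c00 (le_trans h1 h2).
set K := n.+1%:R * c1.
have K0 : 0 <= K by rewrite mulr_ge0 // ltW.
set K2 := (1 + K) ^+ (q.+1).*2.
have K20 : 0 <= K2 by rewrite exprn_ge0 // addr_ge0.
exists ((2 * (n.+1%:R * H0) ^+ 2 + 2) * K2 / (w l0 * refint (fun _ : 'rV[R]_n.+1 => 1))).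
move=> h eps nT M v h0 heps mesh hmesh shp inV.
have eps0 : 0 < eps by apply: lt_trans heps.
rewrite /lhs4 /hnorm2 [X in _ <= X]mulrCA ler_wpM2l ?invr_ge0 ?(ltW eps0) // mulr_sumr.
apply: ler_sum => i sel.
have Tcl : forall x, sset (M i) x -> closure Omega x.
  by move=> x Tx; rewrite -mesh.2.1; exists i.
apply: elem_bound => //.
- exact: mesh.1.
- exact: inV.2.
- by move=> x y Tx Ty; apply: hH0; apply: Tcl.
- move=> x Tx; rewrite /rho; apply: (@sigma_bound R q _ _ (h / eps) K) K0 _.
  + by rewrite divr_gt0 //= ler_pdivrMr // mul1r ltW.
  + move/forallP: sel => /(_ l0) sel.
    by rewrite normrM normrV ?unitfE ?gt_eqF // (gtr0_norm eps0) ler_pdivrMr // mulrC.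
  + rewrite -mulrBl normrM normrV ?unitfE ?gt_eqF // (gtr0_norm eps0) mulrA.
    rewrite ler_pM2r ?invr_gt0 //.
    set y := affmap (M i) (bh l0).
    have Ty : sset (M i) y by apply: affmap_in.
    have hl := @lip R n.+1 phi U (sset (M i)) c1 x y oU
      (fun z Tz => cU z (Tcl z Tz))
      (fun z Uz v => (smU [::]).2 v z Uz)
      (fun v z Uz => (smU [:: v]).1 z Uz)
      (fun z Tz => proj2 (andP (hgrad z (Tcl z Tz))))
      (fun t t01 => conv_convex Tx Ty t01).
    apply: (le_trans hl); rewrite /K -mulrA ler_wpM2l // mulrC.
    rewrite ler_wpM2l ?(ltW c10) // -hmesh.
    apply: (le_trans (le_diam (S := sset (M i)) (H0 := H0) _ Tx Ty)).
      by move=> x' y' Tx' Ty'; apply: hH0; apply: Tcl.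
    exact: le_bigmax.
- by move=> x; apply: sigma_ge0.
- by move=> l; apply: ltW.
Qed.
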